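(* Let $V$ be a real vector space of dimension $m\ge3$ with a positive definite inner product, and let $R\neq0$ be a Jacobi-Tsankov algebraic curvature tensor on $V$ such that $r(x)<m-1$ for all $x\in V$. Then: \begin{enumerate} \item $r(x)=1$ for every $x\in S(V)$; \item $R$ is Osserman. \end{enumerate}
   Context: An algebraic curvature tensor is $R\in\otimes^4V^*$ satisfying $R(x,y,z,w)=R(z,w,x,y)=-R(y,x,z,w)$ and $R(x,y,z,w)+R(y,z,x,w)+R(z,x,y,w)=0$. The curvature operator $\mathcal{R}(x,y)$ is defined by $\langle\mathcal{R}(x,y)z,w\rangle=R(x,y,z,w)$; the Jacobi operator is $J(x):y\mapsto\mathcal{R}(y,x)x$, and $r(x)=\operatorname{Rank}J(x)$. $S(V)=\{\xi\in V:\langle\xi,\xi\rangle=1\}$. $R$ is Jacobi-Tsankov if $x\perp y$ implies $J(x)J(y)=J(y)J(x)$. $R$ is Osserman if the eigenvalues of $J(x)$ are constant for $x\in S(V)$. *)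

(* Defs.v *)
(* V is modelled as 'rV[R]_m (R : realType) with the standard
   (positive definite) inner product; an algebraic curvature tensor is given by
   its components T i j k l in the standard orthonormal basis. *)
From mathcomp Require Import all_boot all_order all_algebra.
From mathcomp Require Import reals.
Set Implicit Arguments. Unset Strict Implicit. Unset Printing Implicit Defensive.
Import Order.TTheory GRing.Theory Num.Theory.
Local Open Scope ring_scope.

Definition dot (R : realType) (m : nat) (x y : 'rV[R]_m) : R := (x *m y^T) 0 0.

Definition Rform (R : realType) (m : nat) (T : 'I_m -> 'I_m -> 'I_m -> 'I_m -> R)
  (x y z w : 'rV[R]_m) : R :=
  \sum_(i < m) \sum_(j < m) \sum_(k < m) \sum_(l < m)
     x 0 i * y 0 j * z 0 k * w 0 l * T i j k l.

Definition is_alg_curv_tensor (R : realType) (m : nat)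
  (T : 'I_m -> 'I_m -> 'I_m -> 'I_m -> R) : Prop :=
  forall x y z w : 'rV[R]_m,
    [/\ Rform T x y z w = Rform T z w x y,
        Rform T x y z w = - Rform T y x z w &
        Rform T x y z w + Rform T y z x w + Rform T z x y w = 0].

(* Jacobi operator J(x) : y |-> Rcal(y,x)x, as a matrix acting on row vectors:
   (y *m Jac T x) 0 l = <Rcal(y,x)x, e_l> = R(y,x,x,e_l). *)
Definition Jac (R : realType) (m : nat) (T : 'I_m -> 'I_m -> 'I_m -> 'I_m -> R)
  (x : 'rV[R]_m) : 'M[R]_m :=
  \matrix_(j < m, l < m) Rform T (delta_mx 0 j) x x (delta_mx 0 l).

Definition rJ (R : realType) (m : nat) (T : 'I_m -> 'I_m -> 'I_m -> 'I_m -> R)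
  (x : 'rV[R]_m) : nat := \rank (Jac T x).

Definition Jacobi_Tsankov (R : realType) (m : nat)
  (T : 'I_m -> 'I_m -> 'I_m -> 'I_m -> R) : Prop :=
  forall x y : 'rV[R]_m, dot x y = 0 -> Jac T x *m Jac T y = Jac T y *m Jac T x.

Definition Osserman (R : realType) (m : nat)
  (T : 'I_m -> 'I_m -> 'I_m -> 'I_m -> R) : Prop :=
  forall x y : 'rV[R]_m, dot x x = 1 -> dot y y = 1 ->
    forall a : R, eigenvalue (Jac T x) a = eigenvalue (Jac T y) a.

(* Main.v *)
Require Import Defs.
From mathcomp Require Import all_boot all_order all_algebra.
From mathcomp Require Import reals.
From mathcomp Require Import ring lra zify.
From Stdlib Require Import Classical.
Set Implicit Arguments. Unset Strict Implicit. Unset Printing Implicit Defensive.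
Import Order.TTheory GRing.Theory Num.Theory.
Local Open Scope ring_scope.


Section Dot.
Variables (R : realType) (m : nat).
Implicit Types (x y z w u v : 'rV[R]_m) (A B M : 'M[R]_m).

Lemma dotE x y : dot x y = \sum_i x 0 i * y 0 i.
Proof. by rewrite /dot mxE; apply: eq_bigr => i _; rewrite mxE. Qed.

Lemma dotC x y : dot x y = dot y x.
Proof. by rewrite !dotE; apply: eq_bigr => i _; rewrite mulrC. Qed.

Lemma dotDl x y z : dot (x + y) z = dot x z + dot y z.
Proof. by rewrite !dotE -big_split; apply: eq_bigr => i _; rewrite mxE mulrDl. Qed.

Lemma dotZl a x z : dot (a *: x) z = a * dot x z.
Proof. by rewrite !dotE mulr_sumr; apply: eq_bigr => i _; rewrite mxE mulrA. Qed.

Lemma dotNl x z : dot (- x) z = - dot x z.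
Proof. by rewrite -scaleN1r dotZl mulN1r. Qed.

Lemma dotBl x y z : dot (x - y) z = dot x z - dot y z.
Proof. by rewrite dotDl dotNl. Qed.

Lemma dot0l z : dot 0 z = 0.
Proof. by rewrite dotE big1 // => i _; rewrite mxE mul0r. Qed.

Lemma dotDr x y z : dot z (x + y) = dot z x + dot z y.
Proof. by rewrite !(dotC z) dotDl. Qed.
Lemma dotZr a x z : dot z (a *: x) = a * dot z x.
Proof. by rewrite !(dotC z) dotZl. Qed.
Lemma dotNr x z : dot z (- x) = - dot z x.
Proof. by rewrite !(dotC z) dotNl. Qed.
Lemma dotBr x y z : dot z (x - y) = dot z x - dot z y.
Proof. by rewrite !(dotC z) dotBl. Qed.
Lemma dot0r z : dot z 0 = 0.
Proof. by rewrite dotC dot0l. Qed.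

Lemma dot_ge0 x : 0 <= dot x x.
Proof. by rewrite dotE; apply: sumr_ge0 => i _; rewrite -expr2 sqr_ge0. Qed.

Lemma dot_eq0 x : (dot x x == 0) = (x == 0).
Proof.
apply/idP/idP => [|/eqP->]; last by rewrite dot0l.
rewrite dotE psumr_eq0 => [/allP H|i _]; last by rewrite -expr2 sqr_ge0.
apply/eqP/rowP => i; rewrite mxE.
by have := H i (mem_index_enum _); rewrite -expr2 sqrf_eq0 => /eqP.
Qed.

Lemma dot_gt0 x : x != 0 -> 0 < dot x x.
Proof. by move=> nx; rewrite lt_def dot_ge0 dot_eq0 nx. Qed.

Lemma dotMl x y M : dot (x *m M) y = dot x (y *m M^T).
Proof. by rewrite /dot trmx_mul trmxK mulmxA. Qed.

Lemma dotMs x y M : M^T = M -> dot (x *m M) y = dot x (y *m M).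
Proof. by move=> sM; rewrite dotMl sM. Qed.

Lemma vec_ext u v : (forall w, dot u w = dot v w) -> u = v.
Proof.
move=> H; apply/eqP; rewrite -subr_eq0 -dot_eq0.
by rewrite {1}dotBl !H -dotBl subrr dot0l.
Qed.

Lemma vec_eq0 u : (forall w, dot u w = 0) -> u = 0.
Proof. by move=> H; apply: vec_ext => w; rewrite H dot0l. Qed.

Lemma sym_sq0 M z : M^T = M -> z *m M *m M = 0 -> z *m M = 0.
Proof.
move=> sM H; apply/eqP; by rewrite -dot_eq0 dotMs // H dot0r.
Qed.

Lemma mx_ext M : (forall v : 'rV[R]_m, v *m M = 0) -> M = 0.
Proof. by move=> H; apply/row_matrixP => i; rewrite row0 rowE H. Qed.

Lemma sym_sq0m M : M^T = M -> M *m M = 0 -> M = 0.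
Proof. by move=> sM H; apply: mx_ext => v; apply: sym_sq0 => //; rewrite -mulmxA H mulmx0. Qed.

Lemma sym_cube0 M : M^T = M -> M *m M *m M = 0 -> M = 0.
Proof.
move=> sM H; apply: mx_ext => v; apply: sym_sq0 => //.
apply: sym_sq0 => //; by rewrite -!mulmxA (mulmxA M) H mulmx0.
Qed.

End Dot.


Section RformLin.
Variables (R : realType) (m : nat) (T : 'I_m -> 'I_m -> 'I_m -> 'I_m -> R).
Implicit Types (x y z w u v a b : 'rV[R]_m).
Local Notation F := (Rform T).

Lemma F_lin1 c x1 x2 y z w :
  F (c *: x1 + x2) y z w = c * F x1 y z w + F x2 y z w.
Proof.
rewrite /Rform mulr_sumr -big_split; apply: eq_bigr => i _.
rewrite mulr_sumr -big_split; apply: eq_bigr => j _.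
rewrite mulr_sumr -big_split; apply: eq_bigr => k _.
rewrite mulr_sumr -big_split; apply: eq_bigr => l _.
rewrite !mxE /=; ring.
Qed.

Hypothesis HT : is_alg_curv_tensor T.

Lemma F_pair x y z w : F x y z w = F z w x y.
Proof. by case: (HT x y z w). Qed.
Lemma F_sw12 x y z w : F x y z w = - F y x z w.
Proof. by case: (HT x y z w). Qed.
Lemma F_bian x y z w : F x y z w + F y z x w + F z x y w = 0.
Proof. by case: (HT x y z w). Qed.
Lemma F_sw34 x y z w : F x y z w = - F x y w z.
Proof. by rewrite F_pair F_sw12 F_pair. Qed.

Lemma F_lin2 c x y1 y2 z w :
  F x (c *: y1 + y2) z w = c * F x y1 z w + F x y2 z w.
Proof. by rewrite F_sw12 F_lin1 (F_sw12 y1) (F_sw12 y2); ring. Qed.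
Lemma F_lin3 c x y z1 z2 w :
  F x y (c *: z1 + z2) w = c * F x y z1 w + F x y z2 w.
Proof. by rewrite F_pair F_lin1 (F_pair z1) (F_pair z2). Qed.
Lemma F_lin4 c x y z w1 w2 :
  F x y z (c *: w1 + w2) = c * F x y z w1 + F x y z w2.
Proof. by rewrite F_sw34 F_lin3 (F_sw34 _ _ _ w1) (F_sw34 _ _ _ w2); ring. Qed.

Lemma F01 y z w : F 0 y z w = 0.
Proof.
have := F_lin1 1 0 0 y z w; rewrite scale1r addr0 mul1r.
by move/(congr1 (fun t => t - F 0 y z w)); rewrite subrr addrK => <-.
Qed.
Lemma F02 x z w : F x 0 z w = 0.
Proof. by rewrite F_sw12 F01 oppr0. Qed.
Lemma F03 x y w : F x y 0 w = 0.
Proof. by rewrite F_pair F01. Qed.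
Lemma F04 x y z : F x y z 0 = 0.
Proof. by rewrite F_pair F02. Qed.

Lemma FD1 x1 x2 y z w : F (x1 + x2) y z w = F x1 y z w + F x2 y z w.
Proof. by rewrite -(scale1r x1) F_lin1 mul1r scale1r. Qed.
Lemma FD2 x y1 y2 z w : F x (y1 + y2) z w = F x y1 z w + F x y2 z w.
Proof. by rewrite -(scale1r y1) F_lin2 mul1r scale1r. Qed.
Lemma FD3 x y z1 z2 w : F x y (z1 + z2) w = F x y z1 w + F x y z2 w.
Proof. by rewrite -(scale1r z1) F_lin3 mul1r scale1r. Qed.
Lemma FD4 x y z w1 w2 : F x y z (w1 + w2) = F x y z w1 + F x y z w2.
Proof. by rewrite -(scale1r w1) F_lin4 mul1r scale1r. Qed.
Lemma FZ1 c x y z w : F (c *: x) y z w = c * F x y z w.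
Proof. by rewrite -(addr0 (c *: x)) F_lin1 F01 addr0. Qed.
Lemma FZ2 c x y z w : F x (c *: y) z w = c * F x y z w.
Proof. by rewrite -(addr0 (c *: y)) F_lin2 F02 addr0. Qed.
Lemma FZ3 c x y z w : F x y (c *: z) w = c * F x y z w.
Proof. by rewrite -(addr0 (c *: z)) F_lin3 F03 addr0. Qed.
Lemma FZ4 c x y z w : F x y z (c *: w) = c * F x y z w.
Proof. by rewrite -(addr0 (c *: w)) F_lin4 F04 addr0. Qed.
Lemma FN1 x y z w : F (- x) y z w = - F x y z w.
Proof. by rewrite -scaleN1r FZ1 mulN1r. Qed.
Lemma FN2 x y z w : F x (- y) z w = - F x y z w.
Proof. by rewrite -scaleN1r FZ2 mulN1r. Qed.
Lemma FN3 x y z w : F x y (- z) w = - F x y z w.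
Proof. by rewrite -scaleN1r FZ3 mulN1r. Qed.
Lemma FN4 x y z w : F x y z (- w) = - F x y z w.
Proof. by rewrite -scaleN1r FZ4 mulN1r. Qed.

Lemma Fxx x z w : F x x z w = 0.
Proof.
have := F_sw12 x x z w => /eqP; rewrite -subr_eq0 opprK -mulr2n mulrn_eq0 /=.
by move/eqP.
Qed.

Lemma F_sym14 a v b : F a v v b = F b v v a.
Proof. by rewrite F_pair F_sw12 F_sw34 opprK. Qed.

Lemma F_sum1 (G : 'I_m -> 'rV[R]_m) y z w :
  F (\sum_j G j) y z w = \sum_j F (G j) y z w.
Proof.
elim/big_rec2: _ => [|j s1 s2 _ <-]; first by rewrite F01.
by rewrite FD1.
Qed.
Lemma F_sum4 (G : 'I_m -> 'rV[R]_m) x y z :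
  F x y z (\sum_j G j) = \sum_j F x y z (G j).
Proof.
elim/big_rec2: _ => [|j s1 s2 _ <-]; first by rewrite F04.
by rewrite FD4.
Qed.

Local Notation J := (Jac T).

Lemma JE v j l : J v j l = F (delta_mx 0 j) v v (delta_mx 0 l).
Proof. by rewrite mxE. Qed.

Lemma FJrow a v l : (a *m J v) 0 l = F a v v (delta_mx 0 l).
Proof.
rewrite mxE {2}(row_sum_delta a) F_sum1; apply: eq_bigr => j _.
by rewrite FZ1 mxE.
Qed.

Lemma FJ a v w : dot (a *m J v) w = F a v v w.
Proof.
rewrite dotE {2}(row_sum_delta w) F_sum4; apply: eq_bigr => l _.
by rewrite FZ4 FJrow mulrC.
Qed.

Lemma Jsym v : (J v)^T = J v.
Proof. by apply/matrixP => j l; rewrite !mxE F_sym14. Qed.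

Definition Sm a b := \matrix_(j, l)
  (F (delta_mx 0 j) a b (delta_mx 0 l) + F (delta_mx 0 j) b a (delta_mx 0 l)).

Lemma F_sym14' a v w b : F a v w b = F b w v a.
Proof. by rewrite F_pair F_sw12 F_sw34 opprK. Qed.

Lemma Smsym a b : (Sm a b)^T = Sm a b.
Proof. by apply/matrixP => j l; rewrite !mxE (F_sym14' (delta_mx 0 l) a b) (F_sym14' (delta_mx 0 l) b a) addrC. Qed.

Lemma SmC a b : Sm a b = Sm b a.
Proof. by apply/matrixP => j l; rewrite !mxE addrC. Qed.

Lemma J_add a b : J (a + b) = J a + Sm a b + J b.
Proof. apply/matrixP => j l; rewrite !mxE !(FD2, FD3); ring. Qed.

Lemma J_expand c d a b :
  J (c *: a + d *: b) = (c ^+ 2) *: J a + (c * d) *: Sm a b + (d ^+ 2) *: J b.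
Proof.
apply/matrixP => j l; rewrite !mxE.
rewrite !(FD2, FD3, FZ2, FZ3); ring.
Qed.

Lemma J_scale c a : J (c *: a) = (c ^+ 2) *: J a.
Proof.
apply/matrixP => j l; rewrite !mxE.
rewrite !(FZ2, FZ3); ring.
Qed.

Lemma J0 : J 0 = 0.
Proof. by apply/matrixP => j l; rewrite !mxE F02. Qed.

Lemma Jself v : v *m J v = 0.
Proof. by apply: vec_eq0 => w; rewrite FJ Fxx. Qed.

Lemma FS a u v w : dot (a *m Sm u v) w = F a u v w + F a v u w.
Proof.
have -> : Sm u v = J (u + v) - J u - J v.
  by apply/matrixP => j l; rewrite !mxE !(FD2, FD3); ring.
rewrite !mulmxBr !dotBl !FJ !(FD2, FD3); ring.
Qed.

Lemma Sm_self a b : a *m Sm a b = - (b *m J a).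
Proof.
apply: vec_ext => w; rewrite FS dotNl FJ Fxx (F_sw12 a b a w); ring.
Qed.

Lemma dotJ a b v : dot (a *m J v) b = dot a (b *m J v).
Proof. by rewrite dotMs // Jsym. Qed.

Lemma dotSm a b v w : dot (v *m Sm a b) w = dot v (w *m Sm a b).
Proof. by rewrite dotMs // Smsym. Qed.

Lemma J_zero_R : (forall v, J v = 0) -> forall x y z w, F x y z w = 0.
Proof.
move=> H.
have H0 : forall u y w, F u y y w = 0 by move=> u y w; rewrite -FJ H mulmx0 dot0l.
have Hm : forall u y z w, F u y z w = - F u z y w.
  move=> u y z w; have := H0 u (y + z) w; rewrite !(FD2, FD3) !H0 add0r addr0.
  by move/eqP; rewrite addr_eq0 => /eqP.
move=> x y z w.
have := F_bian x y z w.
rewrite (F_sw12 y z) (Hm z y x) opprK (F_sw12 z x) (Hm x z y) opprK.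
move=> h.
have : 3%:R * F x y z w = 0 by rewrite -h; ring.
by move/eqP; rewrite mulf_eq0 pnatr_eq0 /= => /eqP.
Qed.

End RformLin.


Section JT.
Variables (R : realType) (m : nat) (T : 'I_m -> 'I_m -> 'I_m -> 'I_m -> R).
Hypothesis HT : is_alg_curv_tensor T.
Hypothesis HJT : Jacobi_Tsankov T.
Implicit Types (x y z w u v a b e : 'rV[R]_m).
Local Notation F := (Rform T).
Local Notation J := (Jac T).
Local Notation S := (Sm T).

Lemma Jcomm x y : dot x y = 0 -> J x *m J y = J y *m J x.
Proof. exact: HJT. Qed.


Lemma J_lin c d x e : J (c *: x + d *: e) = (c ^+ 2) *: J x + (c * d) *: S x e + (d ^+ 2) *: J e.
Proof. exact: J_expand. Qed.

Lemma eS x e : e *m S x e = - (x *m J e).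
Proof. by rewrite SmC Sm_self. Qed.
Lemma xS x e : x *m S x e = - (e *m J x).
Proof. by rewrite Sm_self. Qed.

Lemma dot_lin x e c d : dot x e = 0 ->
  dot (c *: x + d *: e) (c *: x + d *: e) = c ^+ 2 * dot x x + d ^+ 2 * dot e e.
Proof.
move=> h; rewrite !(dotDl, dotDr, dotZl, dotZr) (dotC e x) h; ring.
Qed.

Ltac expdC := repeat progress (rewrite ?mulmxDl ?mulmxDr ?mulmxBl ?mulmxBr ?mulmxN ?mulNmx
  -?scalemxAl -?scalemxAr ?mulmxA ?expr1n ?mulr1 ?scale1r ?dotDl ?dotBl ?dotNl ?dotZl
  ?mul0mx ?mulmx0 ?scaler0 ?addr0 ?add0r ?oppr0 ?dot0l).


Lemma LA0 x e : x != 0 -> dot x e = 0 -> e *m J x = 0 -> x *m J e = 0.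
Proof.
move=> nx hxe hk.
set p := dot e e; set q := dot x x.
have q0 : 0 < q by apply: dot_gt0.
have p0 : 0 <= p by apply: dot_ge0.
have hab : dot (1 *: x + 1 *: e) (p *: x + (- q) *: e) = 0.
  rewrite !(dotDl, dotDr, dotZl, dotZr) (dotC e x) hxe -/p -/q; ring.
have H := Jcomm hab.
rewrite !J_lin in H.
have H2 := congr1 (fun M => e *m M) H; simpl in H2.
move: H2; expdC.
rewrite hk eS (Jself HT); expdC.
set u := x *m J e.
have uA : u *m J x = 0 by rewrite /u -mulmxA -(Jcomm hxe) mulmxA (Jself HT) mul0mx.
move=> H2.
apply: (sym_sq0 (Jsym HT e)); apply: vec_eq0 => w.
have := congr1 (fun v => dot v w) H2; simpl; expdC; rewrite uA; expdC => Hw.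
set t := dot (u *m J e) w in Hw *.
set s := dot (u *m S x e) w in Hw *.
have : - ((q ^+ 2 + p * q) * t) = 0.
  move: Hw; move/eqP; rewrite -subr_eq0 => /eqP Hw.
  apply: eq_trans; last exact: Hw. ring.
move/eqP; rewrite oppr_eq0 mulf_eq0 => /orP [|/eqP //].
move=> h; exfalso; move: h; apply/negP; rewrite lt0r_neq0 //.
have : 0 < q ^+ 2 by rewrite exprn_gt0.
move=> h; apply: ltr_wpDr => //; exact: mulr_ge0 (ltW q0).
Qed.


Lemma orth_decomp x y : x != 0 ->
  exists c y', y = c *: x + y' /\ dot x y' = 0.
Proof.
move=> nx; have q0 : dot x x != 0 by rewrite dot_eq0.
exists (dot x y / dot x x), (y - (dot x y / dot x x) *: x); split.
  by rewrite addrC subrK.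
by rewrite dotBr dotZr mulfVK // subrr.
Qed.

Lemma Scomm z a b : dot z a = 0 -> dot z b = 0 -> J z *m S a b = S a b *m J z.
Proof.
move=> ha hb.
have hab : dot z (a + b) = 0 by rewrite dotDr ha hb addr0.
have := Jcomm hab; rewrite J_add // !mulmxDr !mulmxDl (Jcomm ha) (Jcomm hb).
by move/addIr/addrI.
Qed.

Lemma AE x e : x != 0 -> dot x e = 0 -> e *m J x = 0 ->
  J e *m J x = 0 /\ J x *m J e = 0.
Proof.
move=> nx hxe hk.
have xE := LA0 nx hxe hk.
have key : forall y, dot x y = 0 -> y *m J e *m J x = 0.
  move=> y hy.
  have h := Scomm hy hxe.
  have := congr1 (fun M => e *m M) h; simpl.
  by rewrite !mulmxA hk mul0mx eS mulNmx => /esym/eqP; rewrite oppr_eq0 => /eqP.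
have k1 : J e *m J x = 0.
  apply: mx_ext => y; have [c [y' [-> hy']]] := orth_decomp y nx.
  by rewrite mulmxA !mulmxDl -!scalemxAl xE mul0mx scaler0 add0r key.
split => //.
by rewrite -(Jsym HT x) -(Jsym HT e) -trmx_mul k1 trmx0.
Qed.

Lemma poly3 (C1 C2 C3 : 'M[R]_m) :
  (forall t : R, t *: C1 + t ^+ 2 *: C2 + t ^+ 3 *: C3 = 0) ->
  [/\ C1 = 0, C2 = 0 & C3 = 0].
Proof.
move=> H.
have E : forall j l, [/\ C1 j l = 0, C2 j l = 0 & C3 j l = 0].
  move=> j l.
  have /matrixP/(_ j l) h1 := H 1.
  have /matrixP/(_ j l) h2 := H (-1).
  have /matrixP/(_ j l) h3 := H 2.
  move: h1 h2 h3; rewrite !mxE => h1 h2 h3.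
  split; nra.
by split; apply/matrixP => j l; rewrite mxE; case: (E j l).
Qed.

End JT.


Ltac expd := repeat progress (rewrite ?mulmxDl ?mulmxDr ?mulmxBl ?mulmxBr ?mulmxN ?mulNmx
  -?scalemxAl -?scalemxAr ?scalerA ?mulmxA ?expr1n ?mulr1 ?scale1r ?dotDl ?dotBl ?dotNl ?dotZl
  ?mul0mx ?mulmx0 ?scaler0 ?addr0 ?add0r ?oppr0 ?dot0l).

Section SRsec.
Variables (R : realType) (m : nat) (T : 'I_m -> 'I_m -> 'I_m -> 'I_m -> R).
Hypothesis HT : is_alg_curv_tensor T.
Hypothesis HJT : Jacobi_Tsankov T.
Implicit Types (x y z w u v a b e : 'rV[R]_m).
Local Notation F := (Rform T).
Local Notation J := (Jac T).
Local Notation S := (Sm T).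

Lemma SR x e : x != 0 -> e != 0 -> dot x e = 0 -> e *m J x = 0 ->
  [/\ dot x x *: (S x e *m J e) = dot e e *: (J x *m S x e),
      (dot e e * dot x x) *: (S x e *m S x e)
         = (dot e e) ^+ 2 *: (J x *m J x) + (dot x x) ^+ 2 *: (J e *m J e) &
      dot e e *: (S x e *m J x) = dot x x *: (J e *m S x e)].
Proof.
move=> nx ne hxe hk.
set p := dot e e; set q := dot x x.
have q0 : 0 < q := dot_gt0 nx.
have p0 : 0 < p := dot_gt0 ne.
have xE := LA0 HT HJT nx hxe hk.
have [EA AE'] := AE HT HJT nx hxe hk.
have xS0 : x *m S x e = 0 by rewrite xS // hk oppr0.
have eS0 : e *m S x e = 0 by rewrite eS // xE oppr0.
have H : forall t : R,
  t *: (q ^+ 2 *: (S x e *m J e) - (p * q) *: (J x *m S x e)) +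
  t ^+ 2 *: (p ^+ 2 *: (J x *m J x) - (p * q) *: (S x e *m S x e) + q ^+ 2 *: (J e *m J e)) +
  t ^+ 3 *: (p ^+ 2 *: (S x e *m J x) - (p * q) *: (J e *m S x e)) = 0.
  move=> t.
  pose a := 1 *: x + t *: e.
  pose b := (- (t * p)) *: x + q *: e.
  have hab : dot a b = 0.
    by rewrite /a /b !(dotDl, dotDr, dotZl, dotZr) (dotC e x) hxe -/p -/q; ring.
  have na : a != 0.
    apply/eqP => a0.
    have : dot a a = 0 by rewrite a0 dot0l.
    rewrite /a dot_lin // -/p -/q => h.
    have : 0 < 1 ^+ 2 * q + t ^+ 2 * p.
      by apply: ltr_pwDl; [rewrite expr1n mul1r | apply: mulr_ge0 => //; [exact: sqr_ge0 | exact: ltW]].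
    by rewrite h ltxx.
  have hb : b *m J a = 0.
    rewrite /a /b J_lin //; expd.
    by rewrite (Jself HT) xS0 xE hk eS0 (Jself HT); expd.
  have [_ Hab] := AE HT HJT na hab hb.
  rewrite -Hab /a /b !J_lin //; expd.
  rewrite EA AE'; expd.
  apply/matrixP => j l; rewrite !mxE /=; ring.
have [h1 h2 h3] := poly3 H.
have qn : q != 0 by rewrite gt_eqF.
have pn : p != 0 by rewrite gt_eqF.
split.
- apply: (scalerI qn); rewrite !scalerA.
  move/eqP: h1; rewrite subr_eq0 => /eqP; rewrite expr2 (mulrC p q) => ->.
  by [].
- by move/eqP: h2; rewrite addrAC subr_eq0 eq_sym => /eqP.
- apply: (scalerI pn); rewrite !scalerA.
  move/eqP: h3; rewrite subr_eq0 => /eqP; rewrite expr2 => ->.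
  by [].
Qed.


Hypothesis HR : ~ (forall x y z w : 'rV[R]_m, F x y z w = 0).

Lemma Jnz x : x != 0 -> J x != 0.
Proof.
move=> nx; apply/eqP => A0; apply: HR; apply: (J_zero_R HT) => y.
have [c [e [-> he]]] := orth_decomp y nx.
have [->|ne] := eqVneq e 0; first by rewrite addr0 J_scale // A0 scaler0.
have hk : e *m J x = 0 by rewrite A0 mulmx0.
have [h1 h2 _] := SR nx ne he hk.
have q0 : dot x x != 0 by rewrite dot_eq0.
have p0 : dot e e != 0 by rewrite dot_eq0.
rewrite A0 ?mul0mx ?mulmx0 ?scaler0 ?add0r in h1 h2.
have SE : S x e *m J e = 0.
  by move/eqP: h1; rewrite scaler_eq0 (negbTE q0) => /eqP.
have E0 : J e = 0.
  apply: (sym_cube0 (Jsym HT e)).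
  have := congr1 (fun M => M *m J e) h2; rewrite /= -!scalemxAl -mulmxA SE mulmx0 scaler0.
  by move/esym/eqP; rewrite scaler_eq0 expf_eq0 (negbTE q0) andbF => /eqP.
have S0 : S x e = 0.
  apply: (sym_sq0m (Smsym HT x e)).
  move/eqP: h2; rewrite E0 mulmx0 scaler0 scaler_eq0 mulf_eq0 (negbTE q0) (negbTE p0).
  by move/eqP.
by rewrite -[e]scale1r J_lin // A0 S0 E0 !scaler0 !addr0.
Qed.

End SRsec.


Section LinAlg.
Variables (R : realType) (m : nat).
Implicit Types (x y z w u v : 'rV[R]_m) (M : 'M[R]_m).

Lemma sym_sq0M M (K : 'M[R]_m) : M^T = M -> K *m M *m M = 0 -> K *m M = 0.
Proof.
move=> sM H; apply/row_matrixP => i; rewrite row0 row_mul.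
by apply: sym_sq0 => //; rewrite -!row_mul H row0.
Qed.

Lemma range_decomp M : M^T = M -> forall y, exists w, y *m M = w *m M *m M.
Proof.
move=> sM y.
have sub1 : (M *m M <= M)%MS by apply: submxMl.
have hr : (\rank M <= \rank (M *m M))%N.
  have hk : (kermx (M *m M) <= kermx M)%MS.
    by apply/sub_kermxP; apply: sym_sq0M => //; rewrite -mulmxA mulmx_ker.
  have := mxrankS hk; rewrite !mxrank_ker.
  have := rank_leq_row M; have := rank_leq_row (M *m M).
  move=> h1 h2 h3; lia.
have sub2 : (M <= M *m M)%MS.
  have [_ <-] := mxrank_leqif_sup sub1.
  by rewrite eqn_leq hr mxrankS.
have : (y *m M <= M *m M)%MS by apply: submx_trans sub2; apply: submxMl.
by case/submxP => w ->; exists w; rewrite mulmxA.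
Qed.

Lemma perp_perp x z : x != 0 -> (forall y, dot x y = 0 -> dot z y = 0) ->
  z = (dot z x / dot x x) *: x.
Proof.
move=> nx H; have q0 : dot x x != 0 by rewrite dot_eq0.
set y := z - (dot z x / dot x x) *: x.
have hy : dot x y = 0 by rewrite /y dotBr dotZr (dotC x z) mulfVK // subrr.
have hz := H y hy.
have : dot y y = 0.
  by rewrite {1}/y dotBl dotZl hy hz mulr0 subrr.
by move/eqP; rewrite dot_eq0 subr_eq0 => /eqP.
Qed.

Lemma factor_perp u M : u != 0 -> (forall y, dot u y = 0 -> y *m M = 0) ->
  M = (\col_i (dot (delta_mx 0 i) u / dot u u)) *m (u *m M).
Proof.
move=> nu H; have q0 : dot u u != 0 by rewrite dot_eq0.
apply/row_matrixP => i; rewrite row_mul [LHS]rowE.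
set a := dot (delta_mx 0 i) u / dot u u.
have hd : dot u (delta_mx 0 i - a *: u) = 0.
  by rewrite dotBr dotZr (dotC u) /a mulfVK // subrr.
have := H _ hd; rewrite mulmxBl => /eqP; rewrite subr_eq0 => /eqP ->.
rewrite -scalemxAl; apply/rowP => l; rewrite !mxE big_ord1 !mxE.
by [].
Qed.

Lemma nz_cube M : M^T = M -> M != 0 ->
  exists w, dot (w *m M *m M) (w *m M) != 0.
Proof.
move=> sM nM.
apply: NNPP => Hn.
have H0 : forall w, dot (w *m M *m M) (w *m M) = 0.
  move=> w; apply: NNPP => hw; apply: Hn; exists w; exact/eqP.
have H1 : forall w z, dot (w *m M *m M) (z *m M) = 0.
  move=> w z; have := H0 (w + z).
  rewrite !mulmxDl !(dotDl, dotDr) !H0 add0r addr0.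
  have e1 : dot (z *m M *m M) (w *m M) = dot (w *m M *m M) (z *m M).
    by rewrite dotMs // dotC.
  rewrite e1 => h.
  have : 2%:R * dot (w *m M *m M) (z *m M) = 0.
    by rewrite -h; ring.
  by move/eqP; rewrite mulf_eq0 pnatr_eq0 /= => /eqP.
move/eqP: nM; apply; apply: mx_ext => w.
apply: (sym_sq0 sM); apply/eqP; rewrite -dot_eq0.
by rewrite H1.
Qed.

End LinAlg.


Section Claim.
Variables (R : realType) (m : nat) (T : 'I_m -> 'I_m -> 'I_m -> 'I_m -> R).
Hypothesis HT : is_alg_curv_tensor T.
Hypothesis HJT : Jacobi_Tsankov T.
Hypothesis HR : ~ (forall x y z w : 'rV[R]_m, Rform T x y z w = 0).
Implicit Types (x y z w u v a b e n : 'rV[R]_m).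
Local Notation F := (Rform T).
Local Notation J := (Jac T).
Local Notation S := (Sm T).
Hypothesis HK : forall x, exists e, [/\ e != 0, dot x e = 0 & e *m J x = 0].

Lemma dot_range v x y : y *m J x = 0 -> dot y (v *m J x) = 0.
Proof. by move=> h; rewrite dotC dotJ // h dot0r. Qed.

Lemma claimC x w : x != 0 -> forall y, dot x y = 0 -> y *m J (w *m J x) = 0.
Proof.
move=> nx.
set u := w *m J x.
have [e [ne hxe hk]] := HK x.
have [h1 h2 h3] := SR HT HJT nx ne hxe hk.
set p := dot e e in h1 h2 h3; set q := dot x x in h1 h2 h3.
have q0 : q != 0 by rewrite dot_eq0.
have p0 : p != 0 by rewrite dot_eq0.
have [EA AE'] := AE HT HJT nx hxe hk.
have xE := LA0 HT HJT nx hxe hk.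
have hux : dot x u = 0 by rewrite dot_range // (Jself HT).
have hue : dot e u = 0 by rewrite dot_range.
have step1 : forall n, dot x n = 0 -> n *m J x = 0 -> n *m J u = 0.
  move=> n hxn hnA.
  have [->|nn] := eqVneq n 0; first by rewrite mul0mx.
  have [_ AN] := AE HT HJT nx hxn hnA.
  have uN : u *m J n = 0 by rewrite /u -mulmxA AN mulmx0.
  have hnu : dot n u = 0 by rewrite dot_range.
  exact: (LA0 HT HJT nn hnu uN).
have comm1 : J x *m J u = J u *m J x by apply: Jcomm.
have comm2 : J u *m S x e = S x e *m J u.
  by apply: (Scomm HT HJT); rewrite dotC.
have step2 : forall v, v *m J x *m J u = 0.
  move=> v; set y := v *m J x *m J u.
  have yS : y *m S x e = 0.
    apply: (scalerI p0); rewrite scaler0.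
    have e1 : y *m S x e = v *m (J x *m S x e) *m J u.
      by rewrite /y -!mulmxA comm2.
    rewrite e1 scalemxAl scalemxAr -h1 -scalemxAr -scalemxAl !mulmxA.
    have -> : v *m S x e *m J e *m J u = 0.
      apply: step1.
        by rewrite dotC dotJ // xE dot0r.
      by rewrite -mulmxA EA mulmx0.
    by rewrite scaler0.
  have yE : y *m J e = 0.
    by rewrite /y -(mulmxA v) comm1 -!mulmxA AE' !mulmx0.
  have yA : y *m J x = 0.
    apply: (sym_sq0 (Jsym HT x)).
    have := congr1 (fun M => y *m M) h2; simpl.
    rewrite -!scalemxAr !mulmxA yS mul0mx scaler0 mulmxDr -!scalemxAr !mulmxA yE.
    rewrite mul0mx scaler0 addr0 => /esym/eqP.
    by rewrite scaler_eq0 expf_eq0 (negbTE p0) andbF => /eqP.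
  have ey : y = v *m J u *m J x by rewrite /y -mulmxA comm1 mulmxA.
  apply/eqP; rewrite -dot_eq0; apply/eqP.
  by rewrite {1}ey dotJ // yA dot0r.
move=> y hy.
have [w' hw'] := range_decomp (Jsym HT x) y.
set n := y - w' *m J x.
have hnA : n *m J x = 0 by rewrite /n mulmxBl hw' subrr.
have hxn : dot x n = 0.
  by rewrite /n dotBr hy (dotC x) dotJ // (Jself HT) dot0r subrr.
have -> : y = w' *m J x + n by rewrite /n addrC subrK.
by rewrite mulmxDl step2 (step1 _ hxn hnA) addr0.
Qed.

End Claim.


Section Lin2.
Variables (R : realType) (m : nat).

Lemma ker2 n1 n2 (A : 'M[R]_(m, n1)) (B : 'M[R]_(m, n2)) :
  (\rank A + \rank B < m)%N ->
  exists z : 'rV[R]_m, [/\ z != 0, z *m A = 0 & z *m B = 0].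
Proof.
move=> hr.
set C := row_mx A B.
have hC : (\rank C <= \rank A + \rank B)%N.
  rewrite -mxrank_tr /C tr_row_mx.
  rewrite -addsmxE -(mxrank_tr A) -(mxrank_tr B).
  by case: (mxrank_adds_leqif A^T B^T).
have hK : kermx C != 0.
  rewrite -mxrank_eq0 mxrank_ker; apply/eqP => h.
  have := rank_leq_row C; lia.
have [i hi] : exists i, row i (kermx C) != 0.
  apply/existsP; move: hK; apply: contraR; rewrite negb_exists => /forallP H.
  by apply/eqP/row_matrixP => i; rewrite row0; apply/eqP; have := H i; rewrite negbK.
exists (row i (kermx C)); split => //.
  have := mulmx_ker C; rewrite /C => h.
  have := congr1 (row i) h; rewrite row_mul row0 mul_mx_row => /eqP.
  by rewrite row_mx_eq0 => /andP [/eqP ->].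
have := mulmx_ker C; rewrite /C => h.
have := congr1 (row i) h; rewrite row_mul row0 mul_mx_row => /eqP.
by rewrite row_mx_eq0 => /andP [_ /eqP ->].
Qed.

Lemma rank1_sq (c : 'cV[R]_m) (r : 'rV[R]_m) :
  (c *m r) *m (c *m r) = \tr (c *m r) *: (c *m r).
Proof.
rewrite mxtrace_mulC trace_mx11 mulmxA -(mulmxA c r c).
set k := (r *m c) 0 0.
by rewrite [r *m c]mx11_scalar -/k mul_mx_scalar -scalemxAl.
Qed.

Lemma rank1_rank (c : 'cV[R]_m) (r : 'rV[R]_m) : (\rank (c *m r) <= 1)%N.
Proof. exact: leq_trans (mxrankM_maxl _ _) (rank_leq_col _). Qed.

Lemma rank1_ev (c : 'cV[R]_m) (r : 'rV[R]_m) a : (1 < m)%N ->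
  eigenvalue (c *m r) a = (a == 0) || (a == \tr (c *m r)).
Proof.
move=> hm.
set t := \tr (c *m r).
have ht : t = (r *m c) 0 0 by rewrite /t mxtrace_mulC trace_mx11.
apply/idP/idP.
  case/eigenvalueP => v hv nv.
  set k := (v *m c) 0 0.
  have hvc : v *m c = k%:M by rewrite [LHS]mx11_scalar.
  have hvM : v *m (c *m r) = k *: r by rewrite mulmxA hvc mul_scalar_mx.
  have [k0|nk] := eqVneq k 0.
    move: hv; rewrite hvM k0 scale0r => /esym/eqP; rewrite scaler_eq0 (negbTE nv) orbF.
    by move=> ->.
  apply/orP; right.
  have := congr1 (fun M => M *m c) hv; rewrite /= hvM -!scalemxAl hvc.
  rewrite [r *m c]mx11_scalar -ht.
  move=> /matrixP/(_ 0 0); rewrite !mxE /= !mulr1n => h.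
  by apply/eqP; apply: (mulIf nk); rewrite -h mulrC.
case/orP => /eqP ->.
  have [z [nz hz _]] : exists z : 'rV[R]_m, [/\ z != 0, z *m (c *m r) = 0 & z *m (0 : 'M[R]_(m, m)) = 0].
    by apply: ker2; rewrite mxrank0 addn0; apply: leq_ltn_trans (rank1_rank c r) hm.
  by apply/eigenvalueP; exists z => //; rewrite hz scale0r.
have [t0|nt] := eqVneq t 0.
  have [z [nz hz _]] : exists z : 'rV[R]_m, [/\ z != 0, z *m (c *m r) = 0 & z *m (0 : 'M[R]_(m, m)) = 0].
    by apply: ker2; rewrite mxrank0 addn0; apply: leq_ltn_trans (rank1_rank c r) hm.
  by apply/eigenvalueP; exists z => //; rewrite hz t0 scale0r.
apply/eigenvalueP; exists r.
  by rewrite mulmxA [r *m c]mx11_scalar mul_scalar_mx -ht.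
apply: contra nt => /eqP r0; rewrite /t r0 mulmx0 mxtrace0.
by [].
Qed.

End Lin2.


Section Main.
Variables (R : realType) (m : nat) (T : 'I_m -> 'I_m -> 'I_m -> 'I_m -> R).
Hypothesis HT : is_alg_curv_tensor T.
Hypothesis HJT : Jacobi_Tsankov T.
Hypothesis HR : ~ (forall x y z w : 'rV[R]_m, Rform T x y z w = 0).
Implicit Types (x y z w u v a b e n : 'rV[R]_m).
Local Notation F := (Rform T).
Local Notation J := (Jac T).
Local Notation S := (Sm T).
Hypothesis HK : forall x, exists e, [/\ e != 0, dot x e = 0 & e *m J x = 0].

Lemma Jfactor x : exists (c : 'cV[R]_m) (r : 'rV[R]_m), J x = c *m r.
Proof.
have [->|nx] := eqVneq x 0.
  by exists 0, 0; rewrite (J0 HT) mul0mx.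
have nA := Jnz HT HJT HR nx.
have [w hw] := nz_cube (Jsym HT x) nA.
set u := w *m J x in hw.
have hC := claimC HT HJT HK w nx.
have hxu : x *m J u = (dot (x *m J u) x / dot x x) *: x.
  apply: perp_perp => // y hy.
  by rewrite dotJ // hC // dot0r.
set mu := dot (x *m J u) x / dot x x in hxu.
have q0 : dot x x != 0 by rewrite dot_eq0.
have hmu : mu != 0.
  rewrite /mu mulf_eq0 invr_eq0 (negbTE q0) orbF.
  by rewrite (FJ HT) (F_pair HT) -(FJ HT).
have nu : u != 0.
  by apply: contra hw => /eqP u0; rewrite -/u u0 mul0mx dot0l.
have hx : x = (mu^-1 *: x) *m J u.
  by rewrite -scalemxAl hxu scalerA mulVf //; exact: (esym (scale1r x)).
have hC' := claimC HT HJT HK (mu^-1 *: x) nu.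
rewrite -hx in hC'.
by exists (\col_i (dot (delta_mx 0 i) u / dot u u)), (u *m J x); exact: factor_perp nu hC'.
Qed.

Definition rho v := \tr (J v).

Lemma Jsq x : J x *m J x = rho x *: J x.
Proof. by rewrite /rho; have [c [r ->]] := Jfactor x; rewrite rank1_sq. Qed.

Lemma rho0 : rho 0 = 0.
Proof. by rewrite /rho (J0 HT) mxtrace0. Qed.

Lemma R0 x e : x != 0 -> dot x e = 0 -> e *m J x = 0 ->
  rho x * dot e e = rho e * dot x x.
Proof.
move=> nx hxe hk.
have [->|ne] := eqVneq e 0; first by rewrite dot0l rho0 mulr0 mul0r.
have [h1 h2 _] := SR HT HJT nx ne hxe hk.
set p := dot e e in h1 h2 *; set q := dot x x in h1 h2 *.
have [EA AE'] := AE HT HJT nx hxe hk.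
set X := J x *m S x e.
set Y := S x e *m J e.
set Z := J x *m S x e *m J e.
have K1 : (p * rho x) *: X = q *: Z.
  have := congr1 (fun M => J x *m M) h1; rewrite /= -!scalemxAr !mulmxA Jsq.
  by rewrite -scalemxAl scalerA => <-.
have K2 : p *: Z = (q * rho e) *: Y.
  have := congr1 (fun M => M *m J e) h1; rewrite /= -!scalemxAl -!mulmxA Jsq.
  by rewrite -scalemxAr scalerA => ->; rewrite mulmxA.
have K : (p * (p * rho x)) *: X = (q * rho e * p) *: X.
  rewrite -[LHS]scalerA K1 scalerA (mulrC p q) -[(q * p) *: Z]scalerA K2 scalerA.
  by rewrite (mulrC q (q * rho e)) -[(q * rho e * q) *: Y]scalerA h1 scalerA.
move/eqP: K; rewrite -subr_eq0 -scalerBl scaler_eq0 => /orP [].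
  rewrite -(mulrC p) -mulrBr mulf_eq0 => /orP [/eqP p0|].
    by move: ne; rewrite -dot_eq0 -/p p0 eqxx.
  by rewrite subr_eq0 => /eqP h; rewrite mulrC h mulrC.
move=> /eqP X0; exfalso.
have SA : S x e *m J x = 0.
  by rewrite -(Jsym HT x) -(Smsym HT x e) -trmx_mul -/X X0 trmx0.
have : (p ^+ 2) *: (J x *m J x *m J x) = 0.
  have := congr1 (fun M => M *m J x) h2; rewrite /= mulmxDl -!scalemxAl.
  rewrite -!mulmxA SA EA !mulmx0 !scaler0 addr0 => h.
  by rewrite -h.
move/eqP; rewrite scaler_eq0 expf_eq0 /= => /orP [/eqP p0|/eqP A3].
  by move: ne; rewrite -dot_eq0 -/p p0 eqxx.
by move: (Jnz HT HJT HR nx); rewrite (sym_cube0 (Jsym HT x) A3) eqxx.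
Qed.


Ltac expdH := repeat progress (rewrite ?mulmxDl ?mulmxDr ?mulmxBl ?mulmxBr ?mulmxN ?mulNmx
  -?scalemxAl -?scalemxAr ?scalerA ?mulmxA ?expr1n ?mulr1 ?scale1r ?dotDl ?dotBl ?dotNl ?dotZl
  ?mul0mx ?mulmx0 ?scaler0 ?addr0 ?add0r ?oppr0 ?dot0l).

Lemma R1 x e : x != 0 -> dot x e = 0 -> e *m J x = 0 -> \tr (S x e) = 0.
Proof.
move=> nx hxe hk.
have [->|ne] := eqVneq e 0.
  have -> : S x 0 = 0 by apply/matrixP => j l; rewrite !mxE (F03 HT) (F02 HT) addr0.
  by rewrite mxtrace0.
set p := dot e e; set q := dot x x.
have q0 : 0 < q := dot_gt0 nx.
have p0 : 0 < p := dot_gt0 ne.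
have xE := LA0 HT HJT nx hxe hk.
have xS0 : x *m S x e = 0 by rewrite xS // hk oppr0.
have eS0 : e *m S x e = 0 by rewrite eS // xE oppr0.
pose a := 1 *: x + 1 *: e.
pose b := p *: x + (- q) *: e.
have hab : dot a b = 0.
  by rewrite /a /b !(dotDl, dotDr, dotZl, dotZr) (dotC e x) hxe -/p -/q; ring.
have na : a != 0.
  apply/eqP => a0.
  have : dot a a = 0 by rewrite a0 dot0l.
  rewrite /a dot_lin // -/p -/q !expr1n !mul1r => h.
  by move: (addr_gt0 q0 p0); rewrite h ltxx.
have hb : b *m J a = 0.
  rewrite /a /b J_lin //; expdH.
  by rewrite (Jself HT) xS0 xE hk eS0 (Jself HT); expdH.
have H1 := R0 na hab hb.
have H0 := R0 nx hxe hk.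
rewrite /rho /a /b !J_lin // !mxtraceD !mxtraceZ !dot_lin // -/p -/q in H1.
rewrite /rho -/p -/q in H0.
set s := \tr (S x e) in H1 *.
set rx := \tr (J x) in H0 H1.
set re := \tr (J e) in H0 H1.
move/eqP: H1; rewrite -subr_eq0 => /eqP H1.
have H0' : rx * p - re * q = 0 by rewrite H0 subrr.
have := congr2 (fun (s1 s2 : R) => s1 - (p + q) * (q - p) * s2) H1 H0'.
rewrite /= mulr0 subr0 => h.
have : (p + q) * (2 * p * q * s) = 0.
  by apply: eq_trans; last exact: h; ring.
move/eqP; rewrite !mulf_eq0 => h2.
have hpq : p + q != 0 by rewrite gt_eqF // addr_gt0.
move: h2; rewrite (negbTE hpq) /= (gt_eqF p0) (gt_eqF q0) /= pnatr_eq0 /=.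
by move/eqP.
Qed.

Lemma Rrel x y : x != 0 -> y *m J x = 0 -> rho y * dot x x = rho x * dot y y.
Proof.
move=> nx hy.
have [c [e [hyd he]]] := orth_decomp y nx.
have hk : e *m J x = 0.
  have -> : e = y - c *: x by rewrite hyd addrC addKr.
  by rewrite mulmxBl hy -scalemxAl (Jself HT) scaler0 subr0.
have H0 := R0 nx he hk.
have H1 := R1 nx he hk.
rewrite /rho in H0 *.
rewrite hyd -[e in c *: x + e]scale1r J_lin // !mxtraceD !mxtraceZ H1 dot_lin //.
rewrite mulr0 addr0 !expr1n !mul1r.
nra.
Qed.

End Main.

Section Final.
Variables (R : realType) (m : nat) (T : 'I_m -> 'I_m -> 'I_m -> 'I_m -> R).

Lemma HK_of_rank : (forall x : 'rV[R]_m, (rJ T x < m.-1)%N) ->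
  forall x, exists e, [/\ e != 0, dot x e = 0 & e *m Jac T x = 0].
Proof.
move=> Hr x.
have [z [nz h1 h2]] : exists z : 'rV[R]_m,
    [/\ z != 0, z *m Jac T x = 0 & z *m x^T = 0].
  apply: ker2; have := Hr x; rewrite /rJ; have := rank_leq_col x^T.
  move=> h h'; lia.
exists z; split => //.
by rewrite dotC /dot h2 mxE.
Qed.

End Final.

Theorem lemma2p4 (R : realType) (m : nat) (T : 'I_m -> 'I_m -> 'I_m -> 'I_m -> R) :
  (3 <= m)%N ->
  is_alg_curv_tensor T ->
  ~ (forall x y z w : 'rV[R]_m, Rform T x y z w = 0) ->
  Jacobi_Tsankov T ->
  (forall x : 'rV[R]_m, (rJ T x < m.-1)%N) ->
  (forall x : 'rV[R]_m, dot x x = 1 -> rJ T x = 1%N) /\ Osserman T.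
Proof.
move=> hm HT HR HJT Hrank.
have HK := HK_of_rank Hrank.
have nz1 : forall x : 'rV[R]_m, dot x x = 1 -> x != 0.
  by move=> x hx; apply/eqP => x0; move: hx; rewrite x0 dot0l => /eqP; rewrite eq_sym oner_eq0.
split.
  move=> x hx.
  have nA := Jnz HT HJT HR (nz1 x hx).
  rewrite /rJ; apply/eqP; rewrite eqn_leq.
  have [c [r er]] := Jfactor HT HJT HR HK x.
  rewrite lt0n mxrank_eq0 nA andbT er.
  exact: rank1_rank.
move=> x y hx hy a.
have [cx [rx ex]] := Jfactor HT HJT HR HK x.
have [cy [ry ey]] := Jfactor HT HJT HR HK y.
have hm1 : (1 < m)%N by apply: leq_trans hm.
rewrite ex ey !rank1_ev // -ex -ey.
have [z [nz h1 h2]] : exists z : 'rV[R]_m,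
    [/\ z != 0, z *m Jac T x = 0 & z *m Jac T y = 0].
  apply: ker2; rewrite ex ey.
  have := rank1_rank cx rx; have := rank1_rank cy ry.
  move=> h h'; lia.
have Hx := Rrel HT HJT HR HK (nz1 x hx) h1.
have Hy := Rrel HT HJT HR HK (nz1 y hy) h2.
rewrite hx hy mulr1 in Hx Hy.
have zz : dot z z != 0 by rewrite dot_eq0.
have -> : \tr (Jac T x) = \tr (Jac T y).
  by apply: (mulIf zz); rewrite /rho in Hx Hy; rewrite -Hx -Hy.
by [].
Qed.
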